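(* Let $A\in\{0,1\}^{N\times n}$ and suppose there are $j\in[N]$ and $i_1\ne i_2\in[n]$ with $A_{ji_1}=A_{ji_2}=1$. Let $U_1,\dots,U_N,V_1,\dots,V_n\in\mathbb{R}^d$ be a margin-$m$, relative-bias-$\tau$ embedding of $A$ (for some $m\ge0$, $\tau\in\mathbb{R}$) with $\langle U_j,V_{i_1}\rangle\ne\langle U_j,V_{i_2}\rangle$. Define, for $t>0$, $$\mathcal{L}_{\mathrm{InfoNCE}}(\{U_j\},\{V_i\};t)=-\sum_{(j',i)\in[N]\times[n]:\,A_{j'i}=1}\log\frac{\exp(t\langle U_{j'},V_i\rangle)}{\sum_{\ell=1}^n\exp(t\langle U_{j'},V_\ell\rangle)}.$$ Then $\lim_{T\to+\infty}\mathcal{L}_{\mathrm{InfoNCE}}(\{U_j\},\{V_i\};T)=+\infty$.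
   Context: For $A\in\{0,1\}^{N\times n}$, $m\ge0$ and $\tau\in\mathbb{R}$, unit vectors $U_1,\dots,U_N,V_1,\dots,V_n\in\mathbb{R}^d$ form a margin-$m$, relative-bias-$\tau$ embedding of $A$ if $\langle U_j,V_i\rangle\ge\tau+m$ whenever $A_{ji}=1$ and $\langle U_j,V_i\rangle\le\tau-m$ whenever $A_{ji}=0$. *)

(* Defs.v *)
From HB Require Import structures.
From mathcomp Require Import all_boot all_order all_algebra.
From mathcomp Require Import all_classical all_reals all_analysis.
Set Implicit Arguments. Unset Strict Implicit. Unset Printing Implicit Defensive.
Import Order.TTheory GRing.Theory Num.Theory.
Local Open Scope ring_scope.

Definition dotp (R : realType) (d : nat) (u v : 'rV[R]_d) : R :=
  \sum_(k < d) u ord0 k * v ord0 k.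

Definition unit_vec (R : realType) (d : nat) (u : 'rV[R]_d) : Prop :=
  dotp u u = 1.

Definition margin_embedding (R : realType) (d N n : nat)
  (A : 'I_N -> 'I_n -> bool) (m tau : R)
  (U : 'I_N -> 'rV[R]_d) (V : 'I_n -> 'rV[R]_d) : Prop :=
  (forall j, unit_vec (U j)) /\ (forall i, unit_vec (V i)) /\
  (forall j i, A j i -> tau + m <= dotp (U j) (V i)) /\
  (forall j i, ~~ A j i -> dotp (U j) (V i) <= tau - m).

Definition infoNCE (R : realType) (d N n : nat)
  (A : 'I_N -> 'I_n -> bool)
  (U : 'I_N -> 'rV[R]_d) (V : 'I_n -> 'rV[R]_d) (t : R) : R :=
  - \sum_(j < N) \sum_(i < n | A j i)
      ln (expR (t * dotp (U j) (V i)) /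
          \sum_(l < n) expR (t * dotp (U j) (V l))).

(* Main.v *)
Require Import Defs.
From HB Require Import structures.
From mathcomp Require Import all_boot all_order all_algebra.
From mathcomp Require Import all_classical all_reals all_analysis.
From mathcomp Require Import lra.
Import Order.TTheory GRing.Theory Num.Theory.
Local Open Scope classical_set_scope.
Local Open Scope ring_scope.

Lemma key (R : realType) (x y S : R) : 0 < S -> expR y <= S ->
  y - x <= - ln (expR x / S).
Proof.
move=> S0 hS.
rewrite lnM ?posrE ?expR_gt0 ?invr_gt0 // lnV ?posrE // expRK.
have : y <= ln S by rewrite -ler_ln ?posrE ?expR_gt0 // expRK in hS.
lra.
Qed.

Lemma term_lb (R : realType) (d N n : nat)
  (A : 'I_N -> 'I_n -> bool)
  (U : 'I_N -> 'rV[R]_d) (V : 'I_n -> 'rV[R]_d) (t : R) (j : 'I_N) (i i' : 'I_n) :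
  A j i ->
  t * dotp (U j) (V i') - t * dotp (U j) (V i) <= infoNCE A U V t.
Proof.
move=> Aji.
set f := fun j0 i0 => - ln (expR (t * dotp (U j0) (V i0)) /
          \sum_(l < n) expR (t * dotp (U j0) (V l))).
have Spos : forall j0, 0 < \sum_(l < n) expR (t * dotp (U j0) (V l)).
  move=> j0; rewrite (bigD1 i) //=; apply: ltr_pwDl; first exact: expR_gt0.
  by apply: sumr_ge0 => l _; rewrite ltW ?expR_gt0.
have Sge : forall j0 i0, expR (t * dotp (U j0) (V i0)) <=
     \sum_(l < n) expR (t * dotp (U j0) (V l)).
  move=> j0 i0; rewrite (bigD1 i0) //= lerDl.
  by apply: sumr_ge0 => l _; rewrite ltW ?expR_gt0.
have f0 : forall j0 i0, 0 <= f j0 i0.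
  move=> j0 i0; rewrite /f.
  have := @key R (t * dotp (U j0) (V i0)) _ _ (Spos j0) (Sge j0 i0).
  by rewrite subrr.
have -> : infoNCE A U V t = \sum_(j0 < N) \sum_(i0 < n | A j0 i0) f j0 i0.
  by rewrite /infoNCE -sumrN; apply: eq_bigr => j0 _; rewrite -sumrN.
apply: (le_trans (@key R (t * dotp (U j) (V i)) _ _ (Spos j) (Sge j i'))).
rewrite (bigD1 j) //= [X in _ <= X + _](bigD1 i) //=.
rewrite -addrA lerDl.
apply: addr_ge0; first by apply: sumr_ge0 => l _; exact: f0.
apply: sumr_ge0 => j0 _; apply: sumr_ge0 => l _; exact: f0.
Qed.

Theorem propositionH1 (R : realType) (d N n : nat)
  (A : 'I_N -> 'I_n -> bool) (j : 'I_N) (i1 i2 : 'I_n)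
  (m tau : R) (U : 'I_N -> 'rV[R]_d) (V : 'I_n -> 'rV[R]_d) :
  i1 != i2 -> A j i1 -> A j i2 -> 0 <= m ->
  margin_embedding A m tau U V ->
  dotp (U j) (V i1) != dotp (U j) (V i2) ->
  infoNCE A U V T @[T --> +oo] --> +oo.
Proof.
move=> _ A1 A2 _ _ hne.
set a1 := dotp (U j) (V i1); set a2 := dotp (U j) (V i2).
have c0 : 0 < `|a2 - a1| by rewrite normr_gt0 subr_eq0 eq_sym.
apply/cvgryPge => B.
near=> T.
have T0 : 0 <= T by near: T; apply: nbhs_pinfty_ge; exact: num_real.
have TB : B / `|a2 - a1| <= T by near: T; apply: nbhs_pinfty_ge; exact: num_real.
have h1 := @term_lb R d N n A U V T j i1 i2 A1.
have h2 := @term_lb R d N n A U V T j i2 i1 A2.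
apply: le_trans (_ : T * `|a2 - a1| <= _).
  by rewrite -ler_pdivrMr.
rewrite -/a1 -/a2 in h1 h2.
move: h1 h2; move: (infoNCE A U V T) => L h1 h2.
have [h|h] := lerP 0 (a2 - a1).
  by rewrite (ger0_norm h) mulrBr.
by rewrite (ltr0_norm h) mulrN mulrBr opprB.
Unshelve. all: end_near.
Qed.
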